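(* Let $R$ be a von Neumann regular ring and $M$ a right $R$-module, and let $A=\mathrm{Ann}_R(M)$. Then $M$ is $\Sigma$-$\aleph_0$-injective if and only if $R/A$ is an Artinian ring.
   Context: A right $R$-module $N$ is $\aleph_0$-injective if every $R$-homomorphism from a countably generated right ideal of $R$ into $N$ extends to $R$. $M$ is $\Sigma$-$\aleph_0$-injective if the direct sum $M^{(\Lambda)}$ of $\Lambda$ copies of $M$ is $\aleph_0$-injective for every index set $\Lambda$. $\mathrm{Ann}_R(M)=\{r\in R: Mr=0\}$. *)

(* Defs.v *)
From HB Require Import structures.
From mathcomp Require Import all_boot all_algebra.
From Stdlib Require Import List.
Set Implicit Arguments. Unset Strict Implicit. Unset Printing Implicit Defensive.
Import GRing.Theory.
Local Open Scope ring_scope.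

(* Rings are (possibly non-commutative) unital rings [nzRingType].
   A right R-module is a left module over the converse ring R^c:
   the right action m.r is written (r : R^c) *: m. *)

Definition von_neumann_regular (R : nzRingType) : Prop :=
  forall a : R, exists x : R, a * x * a = a.

Definition right_ideal (R : nzRingType) (J : R -> Prop) : Prop :=
  [/\ J 0, (forall x y, J x -> J y -> J (x - y)) & (forall x r, J x -> J (x * r))].

Definition gen_right_ideal (R : nzRingType) (g : nat -> R) (x : R) : Prop :=
  exists (n : nat) (r : nat -> R), x = \sum_(i < n) g i * r i.

(* Generic aleph_0-injectivity of a right R-module whose elements are the
   elements of carrier N satisfying S, with addition [add] and right action
   [act] : every R-homomorphism from a countably generated right ideal I of R
   into the module extends to an R-homomorphism R -> module. *)
Definition aleph0_inj_gen (R : nzRingType) (N : Type)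
  (add : N -> N -> N) (act : N -> R -> N) (S : N -> Prop) : Prop :=
  forall (g : nat -> R) (f : R -> N),
    let I := gen_right_ideal g in
    (forall x, I x -> S (f x)) ->
    (forall x y, I x -> I y -> f (x + y) = add (f x) (f y)) ->
    (forall x r, I x -> f (x * r) = act (f x) r) ->
    exists h : R -> N,
      [/\ (forall x, S (h x)),
          (forall x y, h (x + y) = add (h x) (h y)),
          (forall x r, h (x * r) = act (h x) r)
        & (forall x, I x -> h x = f x)].

Definition ract (R : nzRingType) (M : lmodType R^c) (m : M) (r : R) : M :=
  (r : R^c) *: m.

Definition aleph0_injective (R : nzRingType) (M : lmodType R^c) : Prop :=
  aleph0_inj_gen (@GRing.add M) (@ract R M) (fun _ => True).

(* The direct sum M^(L): finitely supported functions L -> M with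
   pointwise operations. *)
Definition dsum_add (R : nzRingType) (M : lmodType R^c) (L : Type)
  (u v : L -> M) : L -> M := fun l => u l + v l.
Definition dsum_act (R : nzRingType) (M : lmodType R^c) (L : Type)
  (u : L -> M) (r : R) : L -> M := fun l => ract (u l) r.
Definition fin_supp (R : nzRingType) (M : lmodType R^c) (L : Type)
  (u : L -> M) : Prop :=
  exists s : list L, forall l, ~ In l s -> u l = 0.

Definition Sigma_aleph0_injective (R : nzRingType) (M : lmodType R^c) : Prop :=
  forall L : Type,
    aleph0_inj_gen (@dsum_add R M L) (@dsum_act R M L) (@fin_supp R M L).

Definition Ann (R : nzRingType) (M : lmodType R^c) (r : R) : Prop :=
  forall m : M, ract m r = 0.

(* R/A is (right) Artinian, for a two-sided ideal A: descending chain
   condition on right ideals of R/A, i.e. (correspondence theorem) on right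
   ideals of R containing A. *)
Definition quotient_artinian (R : nzRingType) (A : R -> Prop) : Prop :=
  forall J : nat -> R -> Prop,
    (forall n, right_ideal (J n) /\ (forall a, A a -> J n a)) ->
    (forall n x, J n.+1 x -> J n x) ->
    exists N : nat, forall n, (N <= n)%N -> forall x, J n x <-> J N x.

(* Main.v *)
Require Import Defs.
From mathcomp Require Import all_boot all_algebra.
From Stdlib Require Import Classical ClassicalEpsilon FunctionalExtensionality List.
Set Implicit Arguments. Unset Strict Implicit. Unset Printing Implicit Defensive.
Import GRing.Theory.
Local Open Scope ring_scope.

Definition ideal2 (R : nzRingType) (A : R -> Prop) : Prop :=
  [/\ A 0, (forall x y, A x -> A y -> A (x - y)),
      (forall x a, A a -> A (x * a)) & (forall a x, A a -> A (a * x))].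

Lemma iB (R : nzRingType) (A : R -> Prop) : ideal2 A -> forall x y, A x -> A y -> A (x - y).
Proof. by case. Qed.
Lemma i0 (R : nzRingType) (A : R -> Prop) : ideal2 A -> A 0.
Proof. by case. Qed.
Lemma iL (R : nzRingType) (A : R -> Prop) : ideal2 A -> forall x a, A a -> A (x * a).
Proof. by case. Qed.
Lemma iR (R : nzRingType) (A : R -> Prop) : ideal2 A -> forall a x, A a -> A (a * x).
Proof. by case. Qed.
Lemma iN (R : nzRingType) (A : R -> Prop) : ideal2 A -> forall x, A x -> A (- x).
Proof. move=> h x ax; rewrite -sub0r; apply: iB => //; exact: i0. Qed.
Lemma iD (R : nzRingType) (A : R -> Prop) : ideal2 A -> forall x y, A x -> A y -> A (x + y).
Proof. move=> h x y ax ay; rewrite -[y]opprK; apply: iB => //; exact: iN. Qed.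

Lemma rB (R : nzRingType) (J : R -> Prop) : right_ideal J -> forall x y, J x -> J y -> J (x - y).
Proof. by case. Qed.
Lemma r0 (R : nzRingType) (J : R -> Prop) : right_ideal J -> J 0.
Proof. by case. Qed.
Lemma rM (R : nzRingType) (J : R -> Prop) : right_ideal J -> forall x r, J x -> J (x * r).
Proof. by case. Qed.
Lemma rN (R : nzRingType) (J : R -> Prop) : right_ideal J -> forall x, J x -> J (- x).
Proof. move=> h x ax; rewrite -sub0r; apply: rB => //; exact: r0. Qed.
Lemma rD (R : nzRingType) (J : R -> Prop) : right_ideal J -> forall x y, J x -> J y -> J (x + y).
Proof. move=> h x y ax ay; rewrite -[y]opprK; apply: rB => //; exact: rN. Qed.

Definition orth_seq (R : nzRingType) (A : R -> Prop) (g : nat -> R) : Prop :=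
  [/\ (forall i j, i <> j -> A (g i * g j)), (forall i, A (g i * g i - g i))
    & (forall i, ~ A (g i))].

Definition principal_prop (R : nzRingType) (A : R -> Prop) (J : R -> Prop) :=
  exists e, [/\ J e, A (e * e - e) & forall x, J x -> A (x - e * x)].

Lemma step_lemma (R : nzRingType) (A : R -> Prop) (J : R -> Prop) :
  ideal2 A -> von_neumann_regular R -> right_ideal J ->
  forall e x, J e -> A (e * e - e) -> J x -> ~ A (x - e * x) ->
  exists g, [/\ J g, ~ A g, A (g * g - g), A (e * g) & A (g * e)].
Proof.
move=> hA vnr hJ e x Je Ae Jx nAx.
set y := x - e * x.
have Jy : J y by apply: rB => //; apply: rM.
have Aey : A (e * y).
  have -> : e * y = - ((e * e - e) * x) by rewrite /y mulrBr mulrBl mulrA opprB.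
  by apply: iN => //; apply: (iR hA).
have [z yzy] := vnr y.
set f := y * z.
have ff : f * f = f by rewrite /f mulrA yzy.
have fy : f * y = y by rewrite /f yzy.
have Jf : J f by apply: rM.
have Aef : A (e * f) by rewrite /f mulrA; apply: (iR hA).
clearbody f.
exists (f - f * e); split.
- by apply: rB => //; apply: rM.
- move=> Ag; apply: nAx; rewrite -/y -fy.
  have -> : f * y = (f - f * e) * y + f * (e * y) by rewrite mulrBl mulrA subrK.
  by apply: iD => //; [apply: (iR hA) | apply: (iL hA)].
- have -> : (f - f * e) * (f - f * e) - (f - f * e) = f * (e * f) * e - f * (e * f).
    by rewrite mulrBl !mulrBr !mulrA ff addrAC subrr add0r opprB.
  by apply: iB => //; [apply: (iR hA); apply: (iL hA) | apply: (iL hA)].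
- by rewrite mulrBr mulrA; apply: iB => //; apply: (iR hA).
- have -> : (f - f * e) * e = - (f * (e * e - e)) by rewrite mulrBl mulrBr opprB mulrA.
  by apply: iN => //; apply: (iL hA).
Qed.

Lemma ortho_help (R : nzRingType) (A : R -> Prop) (e g h : R) : ideal2 A ->
  A (e * h - h) -> A (h * e - h) -> A (g * e) -> A (e * g) -> A (g * h) /\ A (h * g).
Proof.
move=> hA h1 h2 h3 h4; split.
- have -> : g * h = g * e * h - g * (e * h - h) by rewrite mulrBr opprB mulrA addrC subrK.
  by apply: (iB hA); [apply: (iR hA) | apply: (iL hA)].
- have -> : h * g = - ((h * e - h) * g) + h * (e * g) by rewrite mulrBl opprB mulrA subrK.
  by apply: (iD hA); [apply: (iN hA); apply: (iR hA) | apply: (iL hA)].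
Qed.

Lemma idem_add (R : nzRingType) (A : R -> Prop) (e g : R) : ideal2 A ->
  A (e * e - e) -> A (g * g - g) -> A (e * g) -> A (g * e) ->
  A ((e + g) * (e + g) - (e + g)).
Proof.
move=> hA h1 h2 h3 h4.
rewrite mulrDl !mulrDr opprD addrACA.
apply: (iD hA).
- rewrite addrAC; exact: (iD hA).
- rewrite -addrA; exact: (iD hA).
Qed.

Lemma principal_of_noorth (R : nzRingType) (A : R -> Prop) (J : R -> Prop) :
  ideal2 A -> von_neumann_regular R -> right_ideal J ->
  (forall g, ~ orth_seq A g) -> principal_prop A J.
Proof.
move=> hA vnr hJ noorth; apply: NNPP => np.
have H : forall e, exists g, (J e /\ A (e * e - e)) ->
    [/\ J g, ~ A g, A (g * g - g), A (e * g) & A (g * e)].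
  move=> e; case: (classic (J e /\ A (e * e - e))) => [[Je Ae]|n]; last first.
    by exists 0 => h; case: (n h).
  have [x [Jx nAx]] : exists x, J x /\ ~ A (x - e * x).
    apply: NNPP => nx; apply: np; exists e; split => // x Jx.
    by apply: NNPP => h; apply: nx; exists x; split.
  have [g Hg] := step_lemma hA vnr hJ Je Ae Jx nAx.
  by exists g.
pose G e := proj1_sig (constructive_indefinite_description _ (H e)).
have GP : forall e, J e /\ A (e * e - e) ->
    [/\ J (G e), ~ A (G e), A (G e * G e - G e), A (e * G e) & A (G e * e)].
  by move=> e; rewrite /G; case: constructive_indefinite_description.
pose es n := iter n (fun e => e + G e) 0.
have esS : forall n, es n.+1 = es n + G (es n) by [].
pose gs n := G (es n).
have Inv : forall k, [/\ J (es k), A (es k * es k - es k) &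
    forall j, (j < k)%N -> A (es k * gs j - gs j) /\ A (gs j * es k - gs j)].
  elim=> [|k [Jk Ak Hk]].
    split => //; first exact: (r0 hJ).
    rewrite /es /= mul0r subr0; exact: (i0 hA).
  have [Jg nAg Agg Aeg Age] := GP _ (conj Jk Ak).
  rewrite esS; split.
  - exact: (rD hJ).
  - exact: idem_add.
  move=> j; rewrite ltnS leq_eqVlt => /orP [/eqP ->|ljk].
    rewrite /gs; split.
    + by rewrite mulrDl -addrA; apply: (iD hA).
    + by rewrite mulrDr -addrA; apply: (iD hA).
  have [h1 h2] := Hk j ljk.
  have [o1 o2] := ortho_help hA h1 h2 Age Aeg.
  split.
  + by rewrite mulrDl addrAC; apply: (iD hA).
  + by rewrite mulrDr addrAC; apply: (iD hA).
apply: (noorth gs); split.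
- have key : forall i j, (i < j)%N -> A (gs i * gs j) /\ A (gs j * gs i).
    move=> i j lij.
    have [Jj Aj Hj] := Inv j.
    have [h1 h2] := Hj i lij.
    have [_ _ _ Aeg Age] := GP _ (conj Jj Aj).
    have [o1 o2] := ortho_help hA h1 h2 Age Aeg.
    by split.
  move=> i j nij; case: (ltngtP i j) => [lij|lji|eij].
  + by case: (key _ _ lij).
  + by case: (key _ _ lji).
  + by case: nij.
- move=> i; have [Ji Ai _] := Inv i; by case: (GP _ (conj Ji Ai)).
- move=> i; have [Ji Ai _] := Inv i; by case: (GP _ (conj Ji Ai)).
Qed.

Definition NB_A (R : nzRingType) (A : R -> Prop) (g : nat -> R) : Prop :=
  exists n0, forall c, (forall i, (i < n0)%N -> A (c * g i)) -> forall k, A (c * g k).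

Lemma idem_notA (R : nzRingType) (A : R -> Prop) (g : R) : ideal2 A ->
  A (g * g - g) -> A (g * g) -> A g.
Proof.
move=> hA h1 h2; have -> : g = g * g - (g * g - g) by rewrite opprB addrC subrK.
exact: (iB hA).
Qed.

Lemma artinian_noorth (R : nzRingType) (A : R -> Prop) : ideal2 A ->
  quotient_artinian A -> forall g, ~ orth_seq A g.
Proof.
move=> hA art g [ho hi hn].
pose J n x := forall i, (i < n)%N -> A (g i * x).
have hJ : forall n, right_ideal (J n) /\ (forall a, A a -> J n a).
  move=> n; split; last by move=> a Aa i _; apply: (iL hA).
  split.
  + by move=> i _; rewrite mulr0; apply: (i0 hA).
  + by move=> x y Jx Jy i lin; rewrite mulrBr; apply: (iB hA); [apply: Jx | apply: Jy].
  + by move=> x r Jx i lin; rewrite mulrA; apply: (iR hA); apply: Jx.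
have hm : forall n x, J n.+1 x -> J n x.
  by move=> n x Jx i lin; apply: Jx; apply: ltnW.
have [N HN] := art J hJ hm.
have JN : J N (g N) by move=> i lin; apply: ho => eiN; rewrite eiN ltnn in lin.
have JN1 : J N.+1 (g N) by apply/(HN N.+1 (leqnSn N)).
apply: (hn N); apply: (idem_notA hA (hi N)); exact: JN1.
Qed.

Lemma nb_noorth (R : nzRingType) (A : R -> Prop) : ideal2 A ->
  (forall g, NB_A A g) -> forall g, ~ orth_seq A g.
Proof.
move=> hA nb g [ho hi hn].
have [n0 Hn] := nb g.
apply: (hn n0); apply: (idem_notA hA (hi n0)).
apply: (Hn (g n0)) => i lin; apply: ho => e; by rewrite e ltnn in lin.
Qed.

Lemma sum_delta (R : nzRingType) (F : nat -> R) n i : (i < n)%N ->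
  \sum_(j < n) F j * (if (j == i :> nat) then 1 else 0) = F i.
Proof.
move=> lin; rewrite (bigD1 (Ordinal lin)) //= eqxx mulr1 big1 ?addr0 //.
move=> j /eqP nj; case: eqP => [ej|]; last by rewrite mulr0.
by case: nj; apply: val_inj.
Qed.

Lemma sum_widen (R : nzRingType) (F r : nat -> R) n k : (n <= k)%N ->
  \sum_(i < n) F i * r i = \sum_(i < k) F i * (if (i < n)%N then r i else 0).
Proof.
move=> lnk; rewrite (big_ord_widen k (fun i => F i * r i) lnk) big_mkcond.
by apply: eq_bigr => i _; case: ifP; rewrite ?mulr0.
Qed.

Lemma artinian_of_nb (R : nzRingType) (A : R -> Prop) : ideal2 A ->
  von_neumann_regular R -> (forall g, NB_A A g) -> quotient_artinian A.
Proof.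
move=> hA vnr nb J hJ hmono.
have noorth := nb_noorth hA nb.
have P : forall n, principal_prop A (J n).
  by move=> n; apply: principal_of_noorth => //; case: (hJ n).
pose e n := proj1_sig (constructive_indefinite_description _ (P n)).
have eP : forall n, [/\ J n (e n), A (e n * e n - e n) & forall x, J n x -> A (x - e n * x)].
  by move=> n; rewrite /e; case: constructive_indefinite_description.
have RJ : forall n, right_ideal (J n) by move=> n; case: (hJ n).
have AJ : forall n a, A a -> J n a by move=> n; case: (hJ n).
have mono : forall n m x, (n <= m)%N -> J m x -> J n x.
  move=> n m x; elim: m => [|m IH]; first by rewrite leqn0 => /eqP ->.
  rewrite leq_eqVlt => /orP [/eqP ->//|]; rewrite ltnS => lnm Jm.
  by apply: IH => //; apply: hmono.
pose d k := e k - e k.+1 * e k.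
have Jd : forall k, J k (d k).
  move=> k; have [Jk _ _] := eP k; have [Jk1 _ _] := eP k.+1.
  apply: (rB (RJ k)) => //; apply: (rM (RJ k)); exact: (mono _ _ _ (leqnSn k) Jk1).
have span : forall n z, J n z -> (exists (r : nat -> R) a, A a /\ z = \sum_(i < n) d i * r i + a) -> A z.
  elim=> [|n IH] z Jz [r [a [Aa Ez]]]; first by rewrite Ez big_ord0 add0r.
  rewrite Ez big_ord_recr /= addrAC in Jz *.
  set k := \sum_(i < n) d i * r i + a.
  have Jk : J n k.
    have -> : k = (k + d n * r n) - d n * r n by rewrite addrK.
    apply: (rB (RJ n)); first by apply: (mono _ _ _ (leqnSn n)).
    by apply: (rM (RJ n)).
  have Ak : A k by apply: IH => //; exists r, a.
  have [_ Ae1 He1] := eP n.+1.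
  set z' := k + d n * r n.
  have Jz' : J n.+1 z' by [].
  have Aez : A (e n.+1 * z').
    rewrite /z' mulrDr; apply: (iD hA); first by apply: (iL hA).
    rewrite mulrA; apply: (iR hA).
    have -> : e n.+1 * d n = - ((e n.+1 * e n.+1 - e n.+1) * e n)
      by rewrite /d mulrBr mulrBl opprB mulrA.
    by apply: (iN hA); apply: (iR hA).
  have -> : z' = (z' - e n.+1 * z') + e n.+1 * z' by rewrite subrK.
  by apply: (iD hA) => //; apply: He1.
have [n0 Hn0] := nb d.
pose K x := exists (r : nat -> R) a, A a /\ x = \sum_(i < n0) d i * r i + a.
have RK : right_ideal K.
  split.
  - exists (fun _ => 0), 0; split; first exact: (i0 hA).
    by rewrite big1 ?addr0 // => i _; rewrite mulr0.
  - move=> x y [r [a [Aa ->]]] [r' [a' [Aa' ->]]].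
    exists (fun i => r i - r' i), (a - a'); split; first exact: (iB hA).
    rewrite opprD addrACA -sumrB; congr (_ + _).
    by apply: eq_bigr => i _; rewrite mulrBr.
  - move=> x s [r [a [Aa ->]]]; exists (fun i => r i * s), (a * s); split.
      exact: (iR hA).
    rewrite mulrDl mulr_suml; congr (_ + _).
    by apply: eq_bigr => i _; rewrite mulrA.
have AK : forall a, A a -> K a.
  move=> a Aa; exists (fun _ => 0), a; split => //.
  by rewrite big1 ?add0r // => i _; rewrite mulr0.
have [e0 [Ke0 Ae0 He0]] := principal_of_noorth hA vnr RK noorth.
have Kd : forall k, K (d k).
  move=> k.
  have A1 : A ((1 - e0) * d k).
    apply: Hn0 => i lin; rewrite mulrBl mul1r; apply: He0.
    exists (fun j => if (j == i :> nat) then 1 else 0), 0; split; first exact: (i0 hA).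
    by rewrite addr0 sum_delta.
  have -> : d k = e0 * d k + (1 - e0) * d k by rewrite mulrBl mul1r addrC subrK.
  by apply: (rD RK); [apply: (rM RK) | apply: AK].
have Ad : forall k, (n0 <= k)%N -> A (d k).
  move=> k lk; apply: (span k) => //.
  have [r [a [Aa Hd]]] := Kd k.
  exists (fun i => if (i < n0)%N then r i else 0), a; split => //.
  by rewrite Hd (sum_widen _ _ lk).
have up : forall k x, (n0 <= k)%N -> J k x -> J k.+1 x.
  move=> k x lk Jx; have [Jk Ak He] := eP k; have [Jk1 _ _] := eP k.+1.
  have Jek : J k.+1 (e k).
    have -> : e k = d k + e k.+1 * e k by rewrite /d subrK.
    by apply: (rD (RJ _)); [apply: AJ; apply: Ad | apply: (rM (RJ _))].
  have -> : x = (x - e k * x) + e k * x by rewrite subrK.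
  by apply: (rD (RJ _)); [apply: AJ; apply: He | apply: (rM (RJ _))].
exists n0 => n ln x; split; first exact: mono.
move=> Jx; rewrite -(subnKC ln); elim: (n - n0)%N => [|t IH]; first by rewrite addn0.
rewrite addnS; apply: up => //; exact: leq_addr.
Qed.

Lemma ractM (R : nzRingType) (M : lmodType R^c) (m : M) (x y : R) : ract m (x * y) = ract (ract m x) y.
Proof. rewrite /ract scalerA. by []. Qed.
Lemma ractD (R : nzRingType) (M : lmodType R^c) (m : M) (x y : R) : ract m (x + y) = ract m x + ract m y.
Proof. by rewrite /ract scalerDl. Qed.
Lemma ract0 (R : nzRingType) (M : lmodType R^c) (x : R) : ract (0 : M) x = 0.
Proof. by rewrite /ract scaler0. Qed.
Lemma ract0r (R : nzRingType) (M : lmodType R^c) (m : M) : ract m 0 = 0.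
Proof. by rewrite /ract scale0r. Qed.
Lemma ractB (R : nzRingType) (M : lmodType R^c) (m : M) (x y : R) : ract m (x - y) = ract m x - ract m y.
Proof. by rewrite /ract scalerBl. Qed.
Lemma ractS (R : nzRingType) (M : lmodType R^c) (m : M) n (F : 'I_n -> R) : ract m (\sum_(i < n) F i) = \sum_(i < n) ract m (F i).
Proof. by rewrite /ract scaler_suml. Qed.

Lemma Ann_ideal (R : nzRingType) (M : lmodType R^c) : ideal2 (Ann M).
Proof.
split.
- by move=> m; rewrite ract0r.
- by move=> x y Ax Ay m; rewrite ractB Ax Ay subr0.
- by move=> x a Aa m; rewrite ractM Aa.
- by move=> a x Aa m; rewrite ractM Aa ract0.
Qed.

Lemma not_in_list (s : list nat) : exists n, ~ In n s.
Proof.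
have H : forall x, In x s -> (x <= foldr addn 0 s)%N.
  elim: s => [|a s IH] x //= [->|Hx]; first exact: leq_addr.
  by apply: leq_trans (IH _ Hx) (leq_addl _ _).
exists (foldr addn 0 s).+1 => Hin; have := H _ Hin; by rewrite ltnn.
Qed.

Lemma sigma_nb (R : nzRingType) (M : lmodType R^c) :
  Sigma_aleph0_injective M -> forall g, NB_A (Ann M) g.
Proof.
move=> Sig g; apply: NNPP => nNB.
have H : forall n, exists m : M, (forall i, (i < n)%N -> ract m (g i) = 0) /\
    exists k, ract m (g k) <> 0.
  move=> n; apply: NNPP => nH; apply: nNB; exists n => c Hc k; apply: NNPP => nA.
  have [m0 Hm0] : exists m0 : M, ract m0 (c * g k) <> 0.
    by apply: NNPP => nm; apply: nA => m0; apply: NNPP => h; apply: nm; exists m0.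
  apply: nH; exists (ract m0 c); split.
    by move=> i lin; rewrite -ractM; apply: Hc.
  by exists k; rewrite -ractM.
pose mm n := proj1_sig (constructive_indefinite_description _ (H n)).
have mmP : forall n, (forall i, (i < n)%N -> ract (mm n) (g i) = 0) /\
    exists k, ract (mm n) (g k) <> 0.
  by move=> n; rewrite /mm; case: constructive_indefinite_description.
pose f (x : R) : nat -> M := fun n => ract (mm n) x.
have h1 : forall x, gen_right_ideal g x -> fin_supp (f x).
  move=> x [K [r ->]]; exists (List.seq 0 K) => l nIn.
  have lK : (K <= l)%N.
    case: (leqP K l) => // lK; exfalso; apply: nIn; apply/in_seq; split.
      by apply/leP.
    by apply/ltP.
  rewrite /f ractS big1 // => i _; rewrite ractM (proj1 (mmP l)) ?ract0 //.
  exact: leq_trans (ltn_ord i) lK.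
have h2 : forall x y, gen_right_ideal g x -> gen_right_ideal g y -> f (x + y) = dsum_add (f x) (f y).
  by move=> x y _ _; apply: functional_extensionality => n; rewrite /f ractD.
have h3 : forall x r, gen_right_ideal g x -> f (x * r) = dsum_act (f x) r.
  by move=> x r _; apply: functional_extensionality => n; rewrite /f /dsum_act ractM.
have [h [hS hadd hact hext]] := Sig nat g f h1 h2 h3.
have [s Hs] := hS 1.
have [n nIn] := not_in_list s.
have [_ [k Hk]] := mmP n.
have Igk : gen_right_ideal g (g k).
  exists k.+1, (fun j => if (j == k :> nat) then 1 else 0).
  by rewrite sum_delta.
have E := hext _ Igk.
have E2 := hact 1 (g k); rewrite mul1r E in E2.
apply: Hk; have := congr1 (fun u => u n) E2; rewrite /f /dsum_act /= => ->.
by rewrite Hs // ract0.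
Qed.

Lemma gen_ri (R : nzRingType) (g : nat -> R) : right_ideal (gen_right_ideal g).
Proof.
split.
- by exists 0%N, (fun _ => 0); rewrite big_ord0.
- move=> x y [n [r ->]] [n' [r' ->]].
  exists (maxn n n'), (fun i => (if (i < n)%N then r i else 0) - (if (i < n')%N then r' i else 0)).
  rewrite (sum_widen _ _ (leq_maxl n n')) (sum_widen _ _ (leq_maxr n n')) -sumrB.
  by apply: eq_bigr => i _; rewrite mulrBr.
- move=> x s [n [r ->]]; exists n, (fun i => r i * s).
  by rewrite mulr_suml; apply: eq_bigr => i _; rewrite mulrA.
Qed.

Lemma art_sigma (R : nzRingType) (M : lmodType R^c) :
  von_neumann_regular R -> quotient_artinian (Ann M) -> Sigma_aleph0_injective M.
Proof.
move=> vnr art L g f I hS hadd hact.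
have hA := Ann_ideal M.
have RI : right_ideal I := gen_ri g.
pose J x := exists i a, [/\ I i, Ann M a & x = i + a].
have RJ : right_ideal J.
  split.
  - by exists 0, 0; split; [exact: (r0 RI) | exact: (i0 hA) | rewrite addr0].
  - move=> x y [i [a [Ii Aa ->]]] [i' [a' [Ii' Aa' ->]]].
    exists (i - i'), (a - a'); split; [exact: (rB RI) | exact: (iB hA) |].
    by rewrite opprD addrACA.
  - move=> x r [i [a [Ii Aa ->]]]; exists (i * r), (a * r); split.
    + exact: (rM RI).
    + exact: (iR hA).
    + by rewrite mulrDl.
have [e [[i0' [a0 [Ii0 Aa0 ee]]] Ae He]] :=
  principal_of_noorth hA vnr RJ (artinian_noorth hA art).
exists (dsum_act (f i0')); split.
- move=> x; have [s Hs] := hS _ Ii0; exists s => l nl.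
  by rewrite /dsum_act Hs // ract0.
- by move=> x y; apply: functional_extensionality => l; rewrite /dsum_act /dsum_add ractD.
- by move=> x r; apply: functional_extensionality => l; rewrite /dsum_act ractM.
move=> x Ix.
set y := x - i0' * x.
have Ii0x : I (i0' * x) by apply: (rM RI).
have Iy : I y by apply: (rB RI).
have Ay : Ann M y.
  have -> : y = (x - e * x) + a0 * x by rewrite /y ee mulrDl opprD addrA subrK.
  apply: (iD hA); first apply: He.
    by exists x, 0; split => //; [exact: (i0 hA) | rewrite addr0].
  exact: (iR hA).
have fy : f y = fun _ => 0.
  have [z yzy] := vnr y.
  have ey : y * (z * y) = y by rewrite mulrA yzy.
  have Azy : Ann M (z * y) by apply: (iL hA).
  apply: functional_extensionality => l.
  by rewrite -ey (hact _ _ Iy) /dsum_act Azy.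
have -> : x = i0' * x + y by rewrite /y addrC subrK.
rewrite (hadd _ _ Ii0x Iy) fy (hact _ _ Ii0).
apply: functional_extensionality => l; rewrite /dsum_add /dsum_act addr0.
by rewrite -/y /y addrC subrK.
Qed.

Theorem lemma3p4 (R : nzRingType) (M : lmodType R^c) :
  von_neumann_regular R ->
  (Sigma_aleph0_injective M <-> quotient_artinian (Ann M)).
Proof.
move=> vnr; split.
- move=> Sig; apply: artinian_of_nb => //; [exact: Ann_ideal | exact: sigma_nb].
- exact: art_sigma.
Qed.
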